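(* Let $L>0$ and $f\in C^1_{\mathrm{pw}}[-L,L]$ with break points $-L=z_0<z_1<\dots<z_N=L$, so that $f\in C^1[z_{j-1},z_j]$ and on each $\tau_j=(z_{j-1},z_j)$ either $f'\le0$ throughout or $f'>0$ throughout. Suppose $f(x)\ge f_{\min}>0$ for all $x\in[-L,L]$. Then $$\prod_{\ell=1}^{N-1}\max\Big\{\frac{f^+(z_\ell)}{f^-(z_\ell)},1\Big\}\le\exp\Big(\frac{1}{f_{\min}}\mathrm{Var}(f)\Big)\quad\text{and}\quad\prod_{\ell=1}^{N-1}\max\Big\{\frac{f^-(z_\ell)}{f^+(z_\ell)},1\Big\}\le\exp\Big(\frac{1}{f_{\min}}\mathrm{Var}(f)\Big).$$
   Context: $C^1_{\mathrm{pw}}[-L,L]$ is the set of $g:[-L,L]\to\mathbb{R}$ for which there is a finite partition $-L=z_0<\dots<z_N=L$ with $g\in C^1[z_{j-1},z_j]$ for each $j$ and, on each $(z_{j-1},z_j)$, either $g'>0$ throughout or $g'\le0$ throughout. $f^+(z)$ and $f^-(z)$ are the right and left one-sided limits at $z$; $[f]_{z_j}=f^-(z_j)-f^+(z_j)$ for $1\le j\le N-1$; $\partial_{\mathrm{pw}}f=f'$ on each open subinterval; $\mathrm{Var}(f)=\sum_{\ell=1}^{N-1}|[f]_{z_\ell}|+\int_{-L}^L|\partial_{\mathrm{pw}}f(s)|\,ds$. *)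

(* Defs.v *)
From HB Require Import structures.
From mathcomp Require Import all_boot all_order all_algebra.
From mathcomp Require Import all_classical all_reals all_analysis.
Set Implicit Arguments. Unset Strict Implicit. Unset Printing Implicit Defensive.
Import Order.TTheory GRing.Theory Num.Theory.
Import numFieldNormedType.Exports.
Local Open Scope classical_set_scope.
Local Open Scope ring_scope.

Section Defs.
Variable R : realType.

Definition C1_closed (a b : R) (g : R -> R) : Prop :=
  exists dg : R -> R,
    (forall x, a <= x <= b ->
       (fun y => (g y - g x) / (y - x)) @
         within (fun y => a <= y <= b /\ y != x) (nbhs x) --> dg x) /\
    {within `[a, b], continuous dg}.

(* f is piecewise C^1 on [-L,L] with respect to the partition
   -L = z 0 < z 1 < ... < z N = L: on each [z (j-1), z j], f coincides on the
   open interval with a C^1 function on the closed interval (so f has a C^1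
   extension there), and on each open subinterval either f' > 0 throughout or
   f' <= 0 throughout. *)
Definition pwC1 (L : R) (N : nat) (z : nat -> R) (f : R -> R) : Prop :=
  [/\ (0 < N)%N, z 0%N = - L, z N = L,
      (forall j, (j < N)%N -> z j < z j.+1) &
      (forall j, (j < N)%N ->
         (exists g, C1_closed (z j) (z j.+1) g /\
                    (forall x, z j < x < z j.+1 -> f x = g x)) /\
         ((forall x, z j < x < z j.+1 -> 0 < derive1 f x) \/
          (forall x, z j < x < z j.+1 -> derive1 f x <= 0)))].

Definition fplus (f : R -> R) (x : R) : R := lim (f @ at_right x).
Definition fminus (f : R -> R) (x : R) : R := lim (f @ at_left x).

Definition jump (f : R -> R) (x : R) : R := fminus f x - fplus f x.

(* piecewise derivative: f' on the open subintervals (its values at the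
   finitely many break points are irrelevant for the integral) *)
Definition dpw (f : R -> R) : R -> R := derive1 f.

Definition Var (L : R) (N : nat) (z : nat -> R) (f : R -> R) : R :=
  \sum_(1 <= l < N) `|jump f (z l)| +
  Rintegral lebesgue_measure `[- L, L] (fun s => `|dpw f s|).

End Defs.

(* Main.v *)
Require Import Defs.
From HB Require Import structures.
From mathcomp Require Import all_boot all_order all_algebra.
From mathcomp Require Import all_classical all_reals all_analysis.
Import Order.TTheory GRing.Theory Num.Theory.
Import numFieldNormedType.Exports.
Local Open Scope classical_set_scope.
Local Open Scope ring_scope.
Set Implicit Arguments. Unset Strict Implicit.
Lemma C1_cont (R : realType) (a b x : R) (g dg : R -> R) :
  (fun y => (g y - g x) / (y - x)) @
         within (fun y => a <= y <= b /\ y != x) (nbhs x) --> dg x ->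
  g y @[y --> within (fun y => a <= y <= b /\ y != x) (nbhs x)] --> g x.
Proof.
move=> Hq.
set W := within _ _.
have Hh : (fun y => (g y - g x) / (y - x) * (y - x) + g x) @ W --> dg x * 0 + g x.
  apply: cvgD; last exact: cvg_cst.
  apply: cvgM => //.
  rewrite -(subrr x); apply: (@cvg_within_filter _ _ _ (nbhs x)); apply: cvgB; [exact: cvg_id | exact: cvg_cst].
rewrite mulr0 add0r in Hh.
apply: cvg_trans; last exact: Hh. idtac.

apply: (@near_eq_cvg _ _ W _ (fun y => (g y - g x) / (y - x) * (y - x) + g x) g).
near=> y.
have [_ ynx] : (fun y => a <= y <= b /\ y != x) y by near: y; exact: near_withinT.
by rewrite divfK ?subr_eq0 // subrK.
Unshelve. all: by end_near.
Qed.
Lemma right_cvg (R : realType) (a b : R) (g f : R -> R) : a < b -> 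
  C1_closed a b g -> (forall x, a < x < b -> f x = g x) -> f y @[y --> a^'+] --> g a.
Proof.
move=> ab [dg [Hd _]] fg.
have Hc := C1_cont (Hd a _).
have {Hc} Hc := Hc ltac:(by rewrite lexx ltW).
have H1 : g y @[y --> a^'+] --> g a.
  apply: cvg_trans; last exact: Hc.
  apply: cvg_app => P; rewrite !nbhs_filterE /within => HP0.
  have HP : \forall y \near nbhs a, (a <= y <= b /\ y != a) -> P y := HP0.
  rewrite /at_right /within /=.
  near=> y => ay.
  apply: (near HP y) => //.
  split; last by rewrite gt_eqF.
  rewrite (ltW ay) /=; near: y; exact: lt_le_nbhsl.
apply: cvg_trans; last exact: H1.
apply: (@near_eq_cvg _ _ (a^'+) _ g f).
suff H : \forall y \near nbhs a, a < y -> g y = f y by exact: H.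
near=> y => ay.
rewrite fg // ay /=; near: y; exact: lt_nbhsl.
Unshelve. all: by end_near.
Qed.

Lemma left_cvg (R : realType) (a b : R) (g f : R -> R) : a < b -> 
  C1_closed a b g -> (forall x, a < x < b -> f x = g x) -> f y @[y --> b^'-] --> g b.
Proof.
move=> ab [dg [Hd _]] fg.
have Hc := C1_cont (Hd b _).
have {Hc} Hc := Hc ltac:(by rewrite lexx ltW).
have H1 : g y @[y --> b^'-] --> g b.
  apply: cvg_trans; last exact: Hc.
  apply: cvg_app => P; rewrite !nbhs_filterE /within => HP0.
  have HP : \forall y \near nbhs b, (a <= y <= b /\ y != b) -> P y := HP0.
  rewrite /at_left /within /=.
  near=> y => yb.
  apply: (near HP y) => //.
  split; last by rewrite lt_eqF.
  rewrite (ltW yb) andbT; near: y; exact: lt_le_nbhsr.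
apply: cvg_trans; last exact: H1.
apply: (@near_eq_cvg _ _ (b^'-) _ g f).
suff H : \forall y \near nbhs b, y < b -> g y = f y by exact: H.
near=> y => yb.
rewrite fg // yb andbT; near: y; exact: lt_nbhsr.
Unshelve. all: by end_near.
Qed.
Lemma key (R : realType) (a b m : R) : 0 < m -> m <= b ->
  Num.max (a / b) 1 <= expR (m^-1 * `|a - b|).
Proof.
move=> m0 mb.
have b0 : 0 < b by apply: lt_le_trans mb.
have e1 : 1 <= expR (m^-1 * `|a - b|).
  apply: le_trans (expR_ge1Dx _); rewrite lerDl mulr_ge0 // invr_ge0 ltW //.
rewrite ge_max e1 andbT.
have [ab|ba] := leP a b.
  by apply: le_trans e1; rewrite ler_pdivrMr // mul1r.
apply: le_trans (expR_ge1Dx _).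
have -> : a / b = 1 + (a - b) / b by rewrite mulrBl divff ?gt_eqF // addrC subrK.
rewrite lerD2l gtr0_norm ?subr_gt0 // mulrC ler_wpM2r ?subr_ge0 ?(ltW ba) //.
by rewrite lef_pV2 ?posrE.
Qed.

Lemma zmono (R : realType) (N : nat) (z : nat -> R) :
  (forall j, (j < N)%N -> z j < z j.+1) ->
  forall i k, (i + k <= N)%N -> z i <= z (i + k)%N.
Proof.
move=> zi i; elim=> [|k IH] H; first by rewrite addn0.
rewrite addnS in H *; apply: le_trans (IH (ltnW H)) _.
exact/ltW/zi.
Qed.

Unset Implicit Arguments. Set Strict Implicit.

Theorem lemma6p1 (R : realType) (L : R) (N : nat) (z : nat -> R)
    (f : R -> R) (fmin : R) :
  0 < L -> pwC1 L N z f -> 0 < fmin ->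
  (forall x, - L <= x <= L -> fmin <= f x) ->
  \prod_(1 <= l < N) Num.max (fplus f (z l) / fminus f (z l)) 1
     <= expR (fmin^-1 * Var L N z f) /\
  \prod_(1 <= l < N) Num.max (fminus f (z l) / fplus f (z l)) 1
     <= expR (fmin^-1 * Var L N z f).
Proof.
move=> L0 [N0 z0 zN zinc Hpw] m0 Hm.
have zle : forall i j, (i <= j <= N)%N -> z i <= z j.
  move=> i j /andP[ij jN]; rewrite -(subnKC ij); apply: (zmono zinc).
  by rewrite subnKC.
have lims : forall l, (1 <= l < N)%N ->
    fmin <= fplus f (z l) /\ fmin <= fminus f (z l).
  move=> l /andP[l1 lN]; split.
    have [[g [Cg fg]] _] := Hpw l lN.
    have Hc := right_cvg (zinc l lN) Cg fg.
    apply: limr_ge; first exact: cvgP Hc.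
    suff H : \forall y \near nbhs (z l), z l < y -> fmin <= f y by exact: H.
    have zlo : - L <= z l by rewrite -z0; apply: zle; rewrite leq0n ltnW.
    have zhi : z l.+1 <= L by rewrite -zN; apply: zle; rewrite lN leqnn.
    near=> y => ly; apply: Hm.
    rewrite (le_trans zlo (ltW ly)) /=.
    apply: le_trans zhi; near: y; apply: lt_le_nbhsl; exact: zinc.
  have lN' : (l.-1 < N)%N by rewrite (leq_ltn_trans (leq_pred l)).
  have [[g [Cg fg]] _] := Hpw l.-1 lN'.
  have Hl : l.-1.+1 = l by rewrite prednK.
  rewrite Hl in Cg fg.
  have zl' : z l.-1 < z l by rewrite -[in X in _ < X]Hl zinc.
  have Hc := left_cvg zl' Cg fg.
  apply: limr_ge; first exact: cvgP Hc.
  suff H : \forall y \near nbhs (z l), y < z l -> fmin <= f y by exact: H.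
  have zlo : - L <= z l.-1 by rewrite -z0; apply: zle; rewrite leq0n ltnW.
  have zhi : z l <= L by rewrite -zN; apply: zle; rewrite leqnn (ltnW lN).
  near=> y => ly; apply: Hm.
  rewrite (le_trans (ltW ly) zhi) andbT.
  apply: le_trans zlo _; near: y; exact: lt_le_nbhsr.
have Vge : \sum_(1 <= l < N) fmin^-1 * `|jump f (z l)| <= fmin^-1 * Var L N z f.
  rewrite -mulr_sumr ler_wpM2l ?invr_ge0 ?(ltW m0) // /Var lerDl.
  by apply: Rintegral_ge0 => x _.
split.
  apply: le_trans (_ : \prod_(1 <= l < N) expR (fmin^-1 * `|jump f (z l)|) <= _).
    rewrite !big_seq; apply: ler_prod => l; rewrite mem_index_iota => Hl.
    have [h1 h2] := lims l Hl.
    rewrite le_max ler01 orbT /=.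
    by rewrite /jump distrC key.
  by rewrite -expR_sum ler_expR.
apply: le_trans (_ : \prod_(1 <= l < N) expR (fmin^-1 * `|jump f (z l)|) <= _).
  rewrite !big_seq; apply: ler_prod => l; rewrite mem_index_iota => Hl.
  have [h1 h2] := lims l Hl.
  rewrite le_max ler01 orbT /=.
  by rewrite /jump key.
by rewrite -expR_sum ler_expR.
Unshelve. all: by end_near.
Qed.
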